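(* Let $\tau:SU(2)\to U(H)$ be a strongly continuous unitary representation on a finite-dimensional Hilbert space $H$, and let $E_m=E_m(\tau,H)$ and $\iota_{k,m}$ be as in the context. Then $(E,\iota)$ is an $SU(2)$-subproduct system (of Hilbert spaces, i.e. over $B=\mathbb{C}$): for all $k,m$, $\iota_{k,m}$ maps $E_{k+m}$ into $E_k\otimes E_m$, and the maps $\iota_{k,m}$ are $SU(2)$-equivariant isometries satisfying the subproduct system axioms.
   Context: $\det(\tau,H)=\{\xi\in H\otimes H:(\tau(g)\otimes\tau(g))\xi=\xi\ \forall g\in SU(2)\}$. For $m\ge2$ let $K_m=\sum_{i=1}^{m-1}H^{\otimes(i-1)}\otimes\det(\tau,H)\otimes H^{\otimes(m-i-1)}\subseteq H^{\otimes m}$ and $E_m=K_m^\perp$; $E_1=H$, $E_0=\mathbb{C}$. $SU(2)$ acts on $E_m$ by the restriction of $\tau^{\otimes m}$ (which leaves $E_m$ invariant), on $E_1$ by $\tau$ and trivially on $E_0$. $\iota_{k,m}:E_{k+m}\to E_k\otimes E_m$ is induced by the canonical identification $H^{\otimes(k+m)}\cong H^{\otimes k}\otimes H^{\otimes m}$ (with $E_0\otimes E_m=E_m=E_m\otimes E_0$). A subproduct system of Hilbert spaces is a sequence $\{E_m\}_{m\in\mathbb{N}_0}$ of Hilbert spaces with $E_0=\mathbb{C}$ and isometries $\iota_{k,m}:E_{k+m}\to E_k\otimes E_m$ such that $\iota_{0,m},\iota_{m,0}$ are the canonical identifications and $(1_{E_k}\otimes\iota_{l,m})\iota_{k,l+m}=(\iota_{k,l}\otimes1_{E_m})\iota_{k+l,m}$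 for all $k,l,m$; it is an $SU(2)$-subproduct system if each $E_m$ carries a strongly continuous unitary $SU(2)$-representation (trivial on $E_0$) and all $\iota_{k,m}$ are equivariant for the diagonal actions. *)

(* Defs.v *)
From HB Require Import structures.
From mathcomp Require Import all_boot all_order all_algebra.
From mathcomp Require Import reals.
From mathcomp Require Import complex.

Set Implicit Arguments.
Unset Strict Implicit.
Unset Printing Implicit Defensive.

Import Order.TTheory GRing.Theory Num.Theory.
Local Open Scope ring_scope.

Section Defs.
Variable R : realType.
Local Notation C := R[i].

Definition adjmx (m n : nat) (A : 'M[C]_(m, n)) : 'M[C]_(n, m) :=
  \matrix_(i, j) (A j i)^*.

Definition SU2 (g : 'M[C]_2) : Prop :=
  g *m adjmx g = 1%:M /\ \det g = 1.

Definition mx_close (m n : nat) (A B : 'M[C]_(m, n)) (e : C) : Prop :=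
  forall i j, `|A i j - B i j| < e.

(* H = C^d with its standard inner product; a unitary representation of
   SU(2) on H is a map tau : 'M_2 -> 'M_d which on SU(2) takes unitary values
   and is multiplicative.  Strong continuity on a finite dimensional space is
   continuity of the matrix entries, i.e. of g |-> tau g v for every v. *)
Definition unitary_rep (d : nat) (tau : 'M[C]_2 -> 'M[C]_d) : Prop :=
  (forall g, SU2 g -> tau g *m adjmx (tau g) = 1%:M) /\
  (forall g h, SU2 g -> SU2 h -> tau (g *m h) = tau g *m tau h).

Definition strongly_continuous (d : nat) (tau : 'M[C]_2 -> 'M[C]_d) : Prop :=
  forall (v : 'cV[C]_d) g, SU2 g -> forall e : C, 0 < e ->
    exists2 delta : C, 0 < delta &
      forall h, SU2 h -> mx_close h g delta ->
        mx_close (tau h *m v) (tau g *m v) e.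

(* A vector of the Hilbert space with orthonormal basis indexed by the finite
   type X is a function X -> C. *)
Definition vec (X : finType) := {ffun X -> C}.

Definition dotv (X : finType) (x y : vec X) : C := \sum_t x t * (y t)^*.

(* linear span (finite-dimensional, hence automatically closed) *)
Definition in_span (X : finType) (P : vec X -> Prop) (x : vec X) : Prop :=
  exists n (c : 'I_n -> C) (v : 'I_n -> vec X),
    (forall i, P (v i)) /\ x = \sum_(i < n) c i *: v i.

Definition orthc (X : finType) (P : vec X -> Prop) (x : vec X) : Prop :=
  forall y, P y -> dotv y x = 0.

(* H (x) H' with H = C^X, H' = C^Y is C^(X * Y); elementary tensors *)
Definition tens (X Y : finType) (u : vec X) (w : vec Y) : vec (X * Y)%type :=
  [ffun p => u p.1 * w p.2].

Definition tensS (X Y : finType) (P : vec X -> Prop) (Q : vec Y -> Prop)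
  : vec (X * Y)%type -> Prop :=
  in_span (fun z => exists u w, [/\ P u, Q w & z = tens u w]).

(* 1 (x) f and f (x) 1 for (linear) f *)
Definition idt (X Y Z : finType) (f : vec Y -> vec Z) (z : vec (X * Y)%type)
  : vec (X * Z)%type := [ffun p => f [ffun y => z (p.1, y)] p.2].
Definition tid (X Y Z : finType) (f : vec X -> vec Z) (z : vec (X * Y)%type)
  : vec (Z * Y)%type := [ffun p => f [ffun x => z (x, p.2)] p.1].
Definition tensop (X Y : finType) (A : vec X -> vec X) (B : vec Y -> vec Y)
  (z : vec (X * Y)%type) : vec (X * Y)%type := tid A (idt B z).

Definition Hpow (d m : nat) := vec (m.-tuple 'I_d).

Definition tpow (d m : nat) (tau : 'M[C]_2 -> 'M[C]_d) (g : 'M[C]_2)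
  (x : Hpow d m) : Hpow d m :=
  [ffun t : m.-tuple 'I_d =>
     \sum_(s : m.-tuple 'I_d)
        (\prod_(i < m) tau g (tnth t i) (tnth s i)) * x s].

Definition detsp (d : nat) (tau : 'M[C]_2 -> 'M[C]_d) (xi : vec ('I_d * 'I_d)%type)
  : Prop :=
  forall g, SU2 g -> tensop (fun v => [ffun a => \sum_b tau g a b * v b])
                           (fun v => [ffun a => \sum_b tau g a b * v b]) xi = xi.

Lemma pos1_proof m (j : 'I_m.-1) : (j < m)%N.
Proof. by case: j => j /= Hj; case: m Hj => //= m Hj; apply: ltnW. Qed.
Lemma pos2_proof m (j : 'I_m.-1) : (j.+1 < m)%N.
Proof. by case: j => j /= Hj; case: m Hj. Qed.
Definition pos1 m (j : 'I_m.-1) : 'I_m := Ordinal (pos1_proof j).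
Definition pos2 m (j : 'I_m.-1) : 'I_m := Ordinal (pos2_proof j).

(* H^{(x)(i-1)} (x) det(tau,H) (x) H^{(x)(m-i-1)}, i = j+1, j : 'I_(m-1),
   via the canonical identification: spanned by the elementary tensors
   a (x) xi (x) b, a in H^{(x) j}, xi in det(tau,H), b in H^{(x)(m-j-2)}. *)
Definition Kslot (d m : nat) (tau : 'M[C]_2 -> 'M[C]_d) (j : 'I_m.-1)
  : Hpow d m -> Prop :=
  in_span (fun y => exists (a b : seq 'I_d -> C) xi, detsp tau xi /\
     y = [ffun t : m.-tuple 'I_d =>
            a (take j t) * xi (tnth t (pos1 j), tnth t (pos2 j))
              * b (drop j.+2 t)]).

(* K_m = sum over the slots; E_m = K_m^perp (K_0 = K_1 = 0, so
   E_0 = H^{(x)0} = C and E_1 = H^{(x)1} = H) *)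
Definition Ksp (d m : nat) (tau : 'M[C]_2 -> 'M[C]_d) : Hpow d m -> Prop :=
  in_span (fun y => exists j : 'I_m.-1, Kslot tau j y).
Definition Esp (d m : nat) (tau : 'M[C]_2 -> 'M[C]_d) : Hpow d m -> Prop :=
  orthc (Ksp tau).

Definition iotaE (d k m : nat) (x : Hpow d (k + m))
  : vec (k.-tuple 'I_d * m.-tuple 'I_d)%type :=
  [ffun p => x (cat_tuple p.1 p.2)].

Definition castA (d k l m : nat) (x : Hpow d (k + (l + m))) : Hpow d (k + l + m) :=
  [ffun t => x (tcast (esym (addnA k l m)) t)].

End Defs.
Arguments Esp {R d} m tau.
Arguments Ksp {R d} m tau.
Arguments iotaE {R d} k m x.

(* Main.v *)
Require Import Defs.
From HB Require Import structures.
From mathcomp Require Import all_boot all_order all_algebra.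
From mathcomp Require Import reals.
From mathcomp Require Import complex.
From mathcomp Require Import zify ring.
From Stdlib Require Import Classical.
Import Order.TTheory GRing.Theory Num.Theory.
Local Open Scope ring_scope.

Set Implicit Arguments. Unset Strict Implicit. Unset Printing Implicit Defensive.

Section VecA.
Variable R : realType.
Local Notation C := R[i].
Variable X : finType.
Local Notation V := (vec R X).

Lemma cjM (x y : C) : (x * y)^* = x^* * y^*. Proof. exact: rmorphM. Qed.
Lemma cjD (x y : C) : (x + y)^* = x^* + y^*. Proof. exact: rmorphD. Qed.
Lemma cjB (x y : C) : (x - y)^* = x^* - y^*. Proof. exact: rmorphB. Qed.
Lemma cj0 : (0 : C)^* = 0. Proof. exact: rmorph0. Qed.
Lemma cj1 : (1 : C)^* = 1. Proof. exact: rmorph1. Qed.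
Lemma cj_sum I (r : seq I) (P : pred I) (F : I -> C) : (\sum_(i <- r | P i) F i)^* = \sum_(i <- r | P i) (F i)^*.
Proof. exact: rmorph_sum. Qed.
Lemma cj_prod I (r : seq I) (P : pred I) (F : I -> C) : (\prod_(i <- r | P i) F i)^* = \prod_(i <- r | P i) (F i)^*.
Proof. exact: rmorph_prod. Qed.

Lemma vecD (x y : V) t : (x + y) t = x t + y t. Proof. by rewrite ffunE. Qed.
Lemma vecZ (c : C) (x : V) t : (c *: x) t = c * x t. Proof. by rewrite ffunE. Qed.
Lemma vec0 t : (0 : V) t = 0. Proof. by rewrite ffunE. Qed.
Lemma vecN (x : V) t : (- x) t = - x t. Proof. by rewrite ffunE. Qed.
Lemma vecB (x y : V) t : (x - y) t = x t - y t. Proof. by rewrite !ffunE. Qed.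
Lemma vec_sum I (r : seq I) (P : pred I) (F : I -> V) t :
  (\sum_(i <- r | P i) F i) t = \sum_(i <- r | P i) F i t.
Proof. by elim/big_rec2: _ => [|i y1 y2 _ <-]; rewrite ffunE. Qed.

Lemma dotvDl (x y z : V) : dotv (x + y) z = dotv x z + dotv y z.
Proof. by rewrite /dotv -big_split; apply: eq_bigr => t _; rewrite vecD mulrDl. Qed.
Lemma dotvZl c (x z : V) : dotv (c *: x) z = c * dotv x z.
Proof. by rewrite /dotv mulr_sumr; apply: eq_bigr => t _; rewrite vecZ mulrA. Qed.
Lemma dotvC (x y : V) : dotv y x = (dotv x y)^*.
Proof. by rewrite /dotv cj_sum; apply: eq_bigr => t _; rewrite cjM conjCK mulrC. Qed.
Lemma dotvDr (x y z : V) : dotv z (x + y) = dotv z x + dotv z y.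
Proof. by rewrite dotvC dotvDl cjD -!dotvC. Qed.
Lemma dotvZr c (x z : V) : dotv z (c *: x) = c^* * dotv z x.
Proof. by rewrite dotvC dotvZl cjM -!dotvC. Qed.
Lemma dotv0l (z : V) : dotv 0 z = 0.
Proof. by rewrite /dotv big1 // => t _; rewrite vec0 mul0r. Qed.
Lemma dotv0r (z : V) : dotv z 0 = 0.
Proof. by rewrite dotvC dotv0l cj0. Qed.
Lemma dotvNl (x z : V) : dotv (- x) z = - dotv x z.
Proof. by rewrite -scaleN1r dotvZl mulN1r. Qed.
Lemma dotvBl (x y z : V) : dotv (x - y) z = dotv x z - dotv y z.
Proof. by rewrite dotvDl dotvNl. Qed.
Lemma dotvBr (x y z : V) : dotv z (x - y) = dotv z x - dotv z y.
Proof. by rewrite dotvC dotvBl cjB -!dotvC. Qed.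
Lemma dotv_suml I (r : seq I) (P : pred I) (F : I -> V) z :
  dotv (\sum_(i <- r | P i) F i) z = \sum_(i <- r | P i) dotv (F i) z.
Proof. by elim/big_rec2: _ => [|i y1 y2 _ <-]; rewrite ?dotv0l ?dotvDl. Qed.

Lemma dotvv_eq0 (x : V) : dotv x x = 0 -> x = 0.
Proof.
move=> H; apply/ffunP => t; rewrite vec0.
have Hge : forall t, 0 <= x t * (x t)^*.
  by move=> s; have := exprn_ge0 2 (normr_ge0 (x s)); rewrite normCK.
have := psumr_eq0P (fun s _ => Hge s) H (isT : predT t).
move=> H2; have : `|x t| ^+ 2 == 0 by rewrite normCK; apply/eqP; exact: H2.
by rewrite expf_eq0 /= normr_eq0 => /eqP.
Qed.

Lemma span_gen (P : V -> Prop) x : P x -> in_span P x.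
Proof.
move=> Px; exists 1%N, (fun _ => 1), (fun _ => x); split => //.
by rewrite big_ord1 scale1r.
Qed.

Lemma span0 (P : V -> Prop) : in_span P 0.
Proof. by exists 0%N, (fun _ => 0), (fun _ => 0); split => [[]|]; rewrite ?big_ord0. Qed.

Lemma span_lin (P : V -> Prop) c x y :
  in_span P x -> in_span P y -> in_span P (c *: x + y).
Proof.
move=> [n [a [v [Hv ->]]]] [n' [a' [v' [Hv' ->]]]].
exists (n + n')%N, (fun i => match split i with inl i => c * a i | inr j => a' j end),
  (fun i => match split i with inl i => v i | inr j => v' j end); split.
  by move=> i; case: (split i).
rewrite big_split_ord /= scaler_sumr; congr (_ + _); apply: eq_bigr => i _.
  by rewrite (unsplitK (inl i : 'I_n + 'I_n')) scalerA.
by rewrite (unsplitK (inr i : 'I_n + 'I_n')).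
Qed.

Lemma span_ind (P Q : V -> Prop) : Q 0 -> (forall c x y, Q x -> Q y -> Q (c *: x + y)) ->
  (forall x, P x -> Q x) -> forall x, in_span P x -> Q x.
Proof.
move=> Q0 Ql QP x [n [a [v [Hv ->]]]].
elim/big_rec: _ => // i y _ Qy; exact: Ql (QP _ (Hv i)) Qy.
Qed.

Lemma span_idem (P : V -> Prop) x : in_span (in_span P) x -> in_span P x.
Proof. apply: span_ind => //; [exact: span0 | by move=> c u w; apply: span_lin]. Qed.

Lemma span_mono (P Q : V -> Prop) x : (forall y, P y -> Q y) -> in_span P x -> in_span Q x.
Proof.
move=> PQ; apply: span_ind; [exact: span0 | by move=> c u w; apply: span_lin|].
by move=> y /PQ; apply: span_gen.
Qed.

Lemma span_sum (P : V -> Prop) I (r : seq I) (F : I -> V) :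
  (forall i, in_span P (F i)) -> in_span P (\sum_(i <- r) F i).
Proof.
move=> H; elim/big_rec: _ => [|i y _ Hy]; first exact: span0.
by rewrite -[F i]scale1r; apply: span_lin.
Qed.

Lemma span_scale (P : V -> Prop) c x : in_span P x -> in_span P (c *: x).
Proof. by move=> H; rewrite -[_ *: x]addr0; apply: span_lin => //; apply: span0. Qed.

Lemma span_orth (P : V -> Prop) q : (forall y, P y -> dotv y q = 0) -> orthc (in_span P) q.
Proof.
move=> H; apply: span_ind => [|c x y Hx Hy|//]; first exact: dotv0l.
by rewrite dotvDl dotvZl Hx Hy mulr0 addr0.
Qed.

End VecA.


Section Proj.
Variable R : realType.
Local Notation C := R[i].
Variable X : finType.
Local Notation V := (vec R X).

Lemma cjV (x : C) : (x^-1)^* = (x^*)^-1. Proof. exact: fmorphV. Qed.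

Lemma gs n (v : 'I_n -> V) x : exists p q, in_span (fun z => exists i, z = v i) p /\
  (forall i, dotv (v i) q = 0) /\ x = p + q.
Proof.
elim: n v x => [|n IH] v x.
  by exists 0, x; split; [exact: span0 | split; [case|rewrite add0r]].
set v' := fun i => v (lift ord0 i).
have sub' : forall y, in_span (fun z => exists i, z = v' i) y ->
    in_span (fun z => exists i, z = v i) y.
  by move=> y; apply: span_mono => z [i ->]; exists (lift ord0 i).
have [pa [w [Hpa [Hw Ha]]]] := IH v' (v ord0).
have [p' [q' [Hp' [Hq' Hx]]]] := IH v' x.
set c := dotv q' w / dotv w w.
exists (p' + c *: w), (q' - c *: w); split; last split.
- rewrite addrC; apply: span_lin; last exact: sub'.
  have -> : w = 1 *: v ord0 + (-1) *: pa by rewrite scale1r scaleN1r Ha addrC addKr.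
  apply: span_lin; first by apply: span_gen; exists ord0.
  by apply: span_scale; apply: sub'.
- have orth_pa : dotv pa (q' - c *: w) = 0.
    apply: (span_orth (P := fun z => exists i, z = v' i)) Hpa.
    by move=> y [i ->]; rewrite dotvBr dotvZr Hq' Hw mulr0 subrr.
  move=> i; case: (unliftP ord0 i) => [j ->|->].
    by rewrite dotvBr dotvZr Hq' Hw mulr0 subrr.
  rewrite Ha dotvDl orth_pa add0r.
  case: (eqVneq w 0) => [->|wn0]; first by rewrite dotv0l.
  have ww0 : dotv w w != 0 by apply/eqP => /dotvv_eq0; apply/eqP.
  rewrite dotvBr dotvZr /c cjM cjV -!dotvC.
  by rewrite mulrAC mulfK // subrr.
- by rewrite Hx addrACA subrr addr0.
Qed.

Local Notation N := #|X|.
Definition rv (x : V) : 'rV[C]_N := \row_i x (enum_val i).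
Definition vr (r : 'rV[C]_N) : V := [ffun t => r 0 (enum_rank t)].
Lemma rvK x : vr (rv x) = x.
Proof. by apply/ffunP => t; rewrite !ffunE mxE enum_rankK. Qed.

Lemma vr_sum n (c : 'I_n -> C) (r : 'I_n -> 'rV[C]_N) :
  vr (\sum_i c i *: r i) = \sum_i c i *: vr (r i).
Proof.
apply/ffunP => t; rewrite ffunE summxE vec_sum; apply: eq_bigr => i _.
by rewrite mxE vecZ ffunE.
Qed.

Definition rows n (A : 'M[C]_(n, N)) (z : V) := exists i, z = vr (row i A).

Lemma sub_span n (A : 'M[C]_(n, N)) y : (rv y <= A)%MS -> in_span (rows A) y.
Proof.
move=> /submxP [D HD]; rewrite -(rvK y) HD mulmx_sum_row vr_sum.
by exists n, (fun i => D 0 i), (fun i => vr (row i A)); split => // i; exists i.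
Qed.

Lemma fin_gen (P : V -> Prop) : exists n (A : 'M[C]_(n, N)),
  (forall i, P (vr (row i A))) /\ forall y, P y -> in_span (rows A) y.
Proof.
apply: NNPP => Hn.
have step : forall n (A : 'M[C]_(n, N)), (forall i, P (vr (row i A))) ->
    exists y, P y /\ ~~ (rv y <= A)%MS.
  move=> n A HA; apply: NNPP => H1; apply: Hn; exists n, A; split => // y Py.
  apply: sub_span; apply: NNPP => H2; apply: H1; exists y; split => //.
  exact/negP.
have big : forall r, exists n (A : 'M[C]_(n, N)), (forall i, P (vr (row i A))) /\ (r <= \rank A)%N.
  elim => [|r [n [A [HA Hr]]]]; first by exists 0%N, 0; split => // [[]].
  have [y [Py Hy]] := step n A HA.
  exists (n + 1)%N, (col_mx A (rv y)); split.
    move=> i; rewrite -(splitK i); case: (split i) => j /=.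
      by rewrite rowKu.
    by rewrite rowKd row_id rvK.
  have : (A < col_mx A (rv y))%MS.
    by rewrite ltmxE -addsmxE addsmxSl /= col_mx_sub submx_refl.
  rewrite ltmxErank => /andP [_]; exact: leq_trans.
have [n [A [_ HA]]] := big N.+1.
by have := rank_leq_col A; rewrite leqNgt HA.
Qed.

Lemma proj_exists (P : V -> Prop) x : exists p q, in_span P p /\ orthc (in_span P) q /\ x = p + q.
Proof.
have [n [A [HA Hspan]]] := fin_gen P.
have [p [q [Hp [Hq Hx]]]] := gs (fun i => vr (row i A)) x.
exists p, q; split; last split => //.
  by apply: span_mono Hp => z [i ->]; apply: HA.
apply: span_orth => y /Hspan Hy.
by apply: (span_orth (P := rows A)) Hy => z [i ->]; apply: Hq.
Qed.

End Proj.


Section Tup.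
Variable R : realType.
Local Notation C := R[i].
Variable d : nat.
Variable tau : 'M[C]_2 -> 'M[C]_d.

Definition Mt n g (t s : n.-tuple 'I_d) : C := \prod_(i < n) tau g (tnth t i) (tnth s i).

Lemma tpowE n g (x : Hpow R d n) t : tpow tau g x t = \sum_s Mt g t s * x s.
Proof. by rewrite ffunE. Qed.

Lemma cat_inj k m : injective (fun p : k.-tuple 'I_d * m.-tuple 'I_d => cat_tuple p.1 p.2).
Proof.
move=> [a b] [a' b'] /(congr1 val) /= /eqP; rewrite eqseq_cat ?size_tuple //.
by move=> /andP [/eqP ha /eqP hb]; congr pair; apply: val_inj.
Qed.

Lemma cat_bij k m : bijective (fun p : k.-tuple 'I_d * m.-tuple 'I_d => cat_tuple p.1 p.2).
Proof.
apply: inj_card_bij; first exact: cat_inj.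
by rewrite card_prod !card_tuple !card_ord expnD.
Qed.

Lemma sum_cat k m (F : (k + m).-tuple 'I_d -> C) :
  \sum_s F s = \sum_(s1 : k.-tuple 'I_d) \sum_(s2 : m.-tuple 'I_d) F (cat_tuple s1 s2).
Proof.
rewrite (reindex (fun p : k.-tuple 'I_d * m.-tuple 'I_d => cat_tuple p.1 p.2)) /=.
  by rewrite pair_big.
exact/onW_bij/cat_bij.
Qed.

Lemma cat_onto k m (t : (k + m).-tuple 'I_d) : exists t1 t2, t = cat_tuple t1 t2.
Proof.
have [f fK Kf] := cat_bij k m.
by exists (f t).1, (f t).2; rewrite Kf.
Qed.

Lemma Mt_cat k m g t1 t2 s1 s2 :
  Mt g (cat_tuple t1 t2) (cat_tuple s1 s2) = Mt (n:=k) g t1 s1 * Mt (n:=m) g t2 s2.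
Proof.
rewrite /Mt big_split_ord; congr (_ * _); apply: eq_bigr => i _.
  by rewrite !tnth_lshift.
by rewrite !tnth_rshift.
Qed.

Lemma sum_prod_tuple n (F : 'I_n -> 'I_d -> C) :
  \sum_(s : n.-tuple 'I_d) \prod_i F i (tnth s i) = \prod_i \sum_a F i a.
Proof.
rewrite bigA_distr_bigA /=.
rewrite (reindex (fun f : {ffun 'I_n -> 'I_d} => [tuple f i | i < n])) /=.
  by apply: eq_bigr => f _; apply: eq_bigr => i _; rewrite tnth_mktuple.
apply: onW_bij; exists (fun t => [ffun i => tnth t i]).
  by move=> f; apply/ffunP => i; rewrite ffunE tnth_mktuple.
by move=> t; apply: eq_from_tnth => i; rewrite tnth_mktuple ffunE.
Qed.

Lemma Mt_mul n g h (t u : n.-tuple 'I_d) : tau (g *m h) = tau g *m tau h ->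
  \sum_s Mt g t s * Mt h s u = Mt (g *m h) t u.
Proof.
move=> Hgh.
under eq_bigr do rewrite /Mt -big_split /=.
rewrite (sum_prod_tuple (fun i a => tau g (tnth t i) a * tau h a (tnth u i))).
by rewrite /Mt Hgh; apply: eq_bigr => i _; rewrite mxE.
Qed.

Lemma Mt_one n (t s : n.-tuple 'I_d) : tau 1%:M = 1%:M -> Mt 1%:M t s = (t == s)%:R.
Proof.
move=> H1; rewrite /Mt H1; case: eqP => [->|ne].
  by rewrite big1 // => i _; rewrite mxE eqxx.
have [i Hi] : exists i, tnth t i != tnth s i.
  apply: NNPP => H; apply: ne; apply: eq_from_tnth => i.
  by apply/eqP; apply: NNPP => H2; apply: H; exists i; apply/negP.
by rewrite (bigD1 i) //= mxE (negbTE Hi) mul0r.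
Qed.

End Tup.


Section Rep.
Variable R : realType.
Local Notation C := R[i].

Lemma adjmxE m n (A : 'M[C]_(m, n)) : adjmx A = map_mx Num.conj A^T.
Proof. by apply/matrixP => i j; rewrite !mxE. Qed.

Lemma adjmxK m n (A : 'M[C]_(m, n)) : adjmx (adjmx A) = A.
Proof. by apply/matrixP => i j; rewrite !mxE conjCK. Qed.

Lemma adjmx1 n : adjmx (1%:M : 'M[C]_n) = 1%:M.
Proof. by apply/matrixP => i j; rewrite !mxE eq_sym; case: eqP; rewrite ?cj1 ?cj0. Qed.

Lemma SU2_1 : @SU2 R 1%:M.
Proof. by split; rewrite ?adjmx1 ?mulmx1 ?det1. Qed.

Lemma SU2_adj (g : 'M[C]_2) : SU2 g -> SU2 (adjmx g) /\ adjmx g *m g = 1%:M.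
Proof.
move=> [Hu Hd]; have H2 := mulmx1C Hu.
split=> //; split; first by rewrite adjmxK.
by rewrite adjmxE det_map_mx det_tr Hd rmorph1.
Qed.

Variable d : nat.
Variable tau : 'M[C]_2 -> 'M[C]_d.
Hypothesis Hrep : unitary_rep tau.

Lemma tau1 : tau 1%:M = 1%:M.
Proof.
have [Hu Hm] := Hrep.
have H := Hu _ SU2_1.
have E : tau 1%:M = tau 1%:M *m tau 1%:M by rewrite -Hm ?mulmx1 //; apply: SU2_1.
by rewrite -{1}H {2}E -mulmxA H mulmx1.
Qed.

Lemma tau_adj g : SU2 g -> tau (adjmx g) = adjmx (tau g).
Proof.
move=> Hg; have [Ha Hag] := SU2_adj Hg; have [Hu Hm] := Hrep.
have E : tau (adjmx g) *m tau g = 1%:M by rewrite -Hm // Hag tau1.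
by rewrite -[tau (adjmx g)]mulmx1 -(Hu g Hg) mulmxA E mul1mx.
Qed.

Lemma tpow_mul m g h (x : Hpow R d m) : SU2 g -> SU2 h ->
  tpow tau (g *m h) x = tpow tau g (tpow tau h x).
Proof.
move=> Hg Hh; have [_ Hm] := Hrep.
apply/ffunP => t; rewrite !tpowE.
under eq_bigr do rewrite -(Mt_mul _ _ (Hm _ _ Hg Hh)) mulr_suml.
rewrite exchange_big /=; apply: eq_bigr => s _.
by rewrite tpowE mulr_sumr; apply: eq_bigr => u _; rewrite mulrA.
Qed.

Lemma tpow_one m (x : Hpow R d m) : tpow tau 1%:M x = x.
Proof.
apply/ffunP => t; rewrite tpowE.
under eq_bigr do rewrite (Mt_one _ _ tau1).
rewrite (bigD1 t) //= eqxx mul1r big1 ?addr0 // => s /negbTE.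
by rewrite eq_sym => ->; rewrite mul0r.
Qed.

Lemma Mt_adj n g (t s : n.-tuple 'I_d) : SU2 g -> (Mt tau g t s)^* = Mt tau (adjmx g) s t.
Proof.
move=> Hg; rewrite /Mt cj_prod tau_adj //; apply: eq_bigr => i _.
by rewrite mxE.
Qed.

Lemma tpow_adj m g (x y : Hpow R d m) : SU2 g ->
  dotv y (tpow tau g x) = dotv (tpow tau (adjmx g) y) x.
Proof.
move=> Hg; rewrite /dotv.
under eq_bigr do rewrite tpowE cj_sum mulr_sumr.
under [RHS]eq_bigr do rewrite tpowE mulr_suml.
rewrite exchange_big /=; apply: eq_bigr => s _; apply: eq_bigr => t _.
by rewrite cjM Mt_adj // mulrCA mulrA.
Qed.

Lemma tpow_iso m g (x y : Hpow R d m) : SU2 g ->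
  dotv (tpow tau g x) (tpow tau g y) = dotv x y.
Proof.
move=> Hg; have [Ha Hag] := SU2_adj Hg.
by rewrite tpow_adj // -tpow_mul // Hag tpow_one.
Qed.

Lemma tpow0 g (x : Hpow R d 0) : tpow tau g x = x.
Proof.
apply/ffunP => t; rewrite tpowE (bigD1 t) //= big1 ?addr0.
  by rewrite /Mt big_ord0 mul1r.
by move=> s; rewrite (tuple0 s) (tuple0 t) eqxx.
Qed.

End Rep.


Section Gen.
Variable R : realType.
Local Notation C := R[i].
Variable d : nat.

Lemma span_map (X Y : finType) (P : vec R X -> Prop) (Q : vec R Y -> Prop)
  (f : vec R X -> vec R Y) :
  f 0 = 0 -> (forall c x y, f (c *: x + y) = c *: f x + f y) ->
  (forall y, P y -> in_span Q (f y)) -> forall x, in_span P x -> in_span Q (f x).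
Proof.
move=> f0 fl fP; apply: span_ind; first by rewrite f0; apply: span0.
  by move=> c x y Hx Hy; rewrite fl; apply: span_lin.
exact: fP.
Qed.

Definition ext n (F : n.-tuple 'I_d -> C) (s : seq 'I_d) : C :=
  \sum_(u : n.-tuple 'I_d) (if val u == s then F u else 0).

Lemma ext_val n (F : n.-tuple 'I_d -> C) u : ext F (val u) = F u.
Proof.
rewrite /ext (bigD1 u) //= eqxx big1 ?addr0 // => v /negbTE.
by rewrite -(inj_eq val_inj) => ->.
Qed.

Variable tau : 'M[C]_2 -> 'M[C]_d.

Lemma tpow_lin m g c (x y : Hpow R d m) :
  tpow tau g (c *: x + y) = c *: tpow tau g x + tpow tau g y.
Proof.
apply/ffunP => t; rewrite !ffunE scaler_sumr -big_split /=; apply: eq_bigr => s _.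
by rewrite !ffunE mulrDr mulrCA.
Qed.

Lemma tpow_0 m g : tpow tau g (0 : Hpow R d m) = 0.
Proof. by apply/ffunP => t; rewrite !ffunE big1 // => s _; rewrite ffunE mulr0. Qed.

Definition gen m (j : 'I_m.-1) (f : seq 'I_d -> C) (u : 'I_d * 'I_d -> C)
  (h : seq 'I_d -> C) : Hpow R d m :=
  [ffun t : m.-tuple 'I_d =>
     f (take j t) * u (tnth t (pos1 j), tnth t (pos2 j)) * h (drop j.+2 t)].

Lemma gen_at m (j : 'I_m.-1) f u h (t : m.-tuple 'I_d) s1 p q s3 :
  val t = s1 ++ p :: q :: s3 -> size s1 = j -> gen j f u h t = f s1 * u (p, q) * h s3.
Proof.
move=> Ht Hs; rewrite ffunE Ht take_size_cat // drop_cat Hs.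
have -> : (j.+2 < j)%N = false by lia.
have -> : (j.+2 - j = 2)%N by lia.
congr (_ * u (_, _) * _).
  by rewrite (tnth_nth p) /= Ht nth_cat Hs ltnn subnn.
rewrite (tnth_nth p) /= Ht nth_cat Hs.
have -> : (j.+1 < j)%N = false by lia.
have -> : (j.+1 - j = 1)%N by lia.
  by [].
by rewrite /= drop0.
Qed.

Lemma Mt_tcast n m (e : n = m) g (T S : n.-tuple 'I_d) :
  Mt tau g (tcast e T) (tcast e S) = Mt tau g T S.
Proof. by case: m / e; rewrite !tcast_id. Qed.

Lemma sum_tcast n m (e : n = m) (F : m.-tuple 'I_d -> C) :
  \sum_s F s = \sum_(S : n.-tuple 'I_d) F (tcast e S).
Proof. by case: m / e F => F; apply: eq_bigr => s _; rewrite tcast_id. Qed.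

Lemma sum_tuple1 (F : 1.-tuple 'I_d -> C) : \sum_s F s = \sum_a F [tuple a].
Proof.
rewrite (reindex (fun a => [tuple a])) //; apply: onW_bij.
exists (fun s : 1.-tuple 'I_d => thead s) => [a|s]; first by rewrite theadE.
by case: s => [[|a [|]]] //= Hs; apply: val_inj.
Qed.

Lemma tuple1_eta (s : 1.-tuple 'I_d) : s = [tuple thead s].
Proof. by case: s => [[|a [|]]] //= Hs; apply: val_inj. Qed.

Lemma Mt1 g (a b : 'I_d) : @Mt R d tau 1 g [tuple a] [tuple b] = tau g a b.
Proof. by rewrite /Mt big_ord1. Qed.

Lemma sum_tuple2 g (xi : vec R ('I_d * 'I_d)%type) p q :
  \sum_(s : 2.-tuple 'I_d) Mt tau g (cat_tuple [tuple p] [tuple q]) s * xi (tnth s (@Ordinal 2 0 isT), tnth s (@Ordinal 2 1 isT))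
  = tensop (fun v => [ffun a => \sum_b tau g a b * v b])
           (fun v => [ffun a => \sum_b tau g a b * v b]) xi (p, q).
Proof.
rewrite (sum_cat (k:=1) (m:=1)) sum_tuple1 /tensop /tid /idt !ffunE /=.
apply: eq_bigr => a _; rewrite sum_tuple1 !ffunE mulr_sumr; apply: eq_bigr => b _.
by rewrite Mt_cat !Mt1 !ffunE mulrA.
Qed.

End Gen.

Lemma sum4 (R : realType) (I J K L : finType) (a : I -> R[i]) (x : J -> K -> R[i]) (b : L -> R[i]) :
  (\sum_i a i) * (\sum_j \sum_k x j k) * (\sum_l b l) =
  \sum_i \sum_j \sum_k \sum_l a i * x j k * b l.
Proof.
rewrite mulr_suml mulr_suml; apply: eq_bigr => i _.
rewrite [a i * _]mulr_sumr mulr_suml; apply: eq_bigr => j _.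
rewrite [a i * _]mulr_sumr mulr_suml; apply: eq_bigr => k _.
by rewrite mulr_sumr.
Qed.

Section Inv.
Variable R : realType.
Local Notation C := R[i].
Variable d : nat.
Variable tau : 'M[C]_2 -> 'M[C]_d.

Lemma tpow_gen m (j : 'I_m.-1) h a (xi : vec R ('I_d * 'I_d)%type) b :
  SU2 h -> detsp tau xi ->
  tpow tau h (gen j a xi b) =
  gen j (ext (tpow tau h [ffun u : j.-tuple 'I_d => a (val u)])) xi
        (ext (tpow tau h [ffun u : (m - j.+2).-tuple 'I_d => b (val u)])).
Proof.
move=> Hh Hxi.
set r := (m - j.+2)%N.
have e : (j + (2 + r))%N = m by rewrite /r; have := ltn_ord j; lia.
apply/ffunP => t.
have [t1 [T' Ht]] := cat_onto (tcast (esym e) t).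
have [t2 [t3 HT']] := cat_onto T'.
have [p1 [q1 Ht2]] := cat_onto (k:=1) (m:=1) t2.
set p := thead p1; set q := thead q1.
have Et : t = tcast e (cat_tuple t1 (cat_tuple (cat_tuple [tuple p] [tuple q]) t3)).
  by rewrite -(tuple1_eta p1) -(tuple1_eta q1) -Ht2 -HT' -Ht tcastKV.
have Hval : val t = t1 ++ p :: q :: t3 by rewrite Et /= val_tcast.
rewrite [in RHS](gen_at _ _ _ Hval) ?size_tuple // !ext_val.
have Hpq : xi (p, q) = \sum_p' \sum_q' tau h p p' * tau h q q' * xi (p', q').
  rewrite -[in LHS](Hxi h Hh) /tensop /tid /idt !ffunE; apply: eq_bigr => p' _.
  under [RHS]eq_bigr do rewrite -mulrA.
  rewrite -mulr_sumr; congr (_ * _); rewrite !ffunE; apply: eq_bigr => q' _; by rewrite !ffunE.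
rewrite Hpq !tpowE sum4 (sum_tcast e) sum_cat Et.
apply: eq_bigr => s1 _.
rewrite sum_cat (sum_cat (k:=1) (m:=1)) sum_tuple1; apply: eq_bigr => p' _.
rewrite sum_tuple1; apply: eq_bigr => q' _; apply: eq_bigr => s3 _.
rewrite Mt_tcast !Mt_cat (@gen_at R d _ _ a xi b _ s1 p' q' s3) ?size_tuple //.
  rewrite !ffunE /= (@Mt_cat R d tau 1 1) !Mt1; ring.
by rewrite /= val_tcast.
Qed.

Lemma Kslot_inv m (j : 'I_m.-1) h (y : Hpow R d m) : SU2 h -> Kslot tau j y -> Kslot tau j (tpow tau h y).
Proof.
move=> Hh; apply: span_map; [exact: tpow_0 | exact: tpow_lin |].
move=> z [a [b [xi [Hxi ->]]]]; apply: span_gen.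
by do 3 eexists; split; [exact: Hxi | exact: (tpow_gen j a b Hh Hxi)].
Qed.

Lemma Ksp_inv m h (y : Hpow R d m) : SU2 h -> Ksp m tau y -> Ksp m tau (tpow tau h y).
Proof.
move=> Hh; apply: span_map; [exact: tpow_0 | exact: tpow_lin |].
by move=> z [j Hz]; apply: span_gen; exists j; apply: Kslot_inv.
Qed.

Hypothesis Hrep : unitary_rep tau.

Lemma Esp_inv m g (x : Hpow R d m) : SU2 g -> Esp m tau x -> Esp m tau (tpow tau g x).
Proof.
move=> Hg Hx y Hy; rewrite (tpow_adj Hrep) //; apply: Hx; apply: Ksp_inv => //.
exact: (SU2_adj Hg).1.
Qed.

End Inv.


Section Iota.
Variable R : realType.
Local Notation C := R[i].
Variable d : nat.
Variable tau : 'M[C]_2 -> 'M[C]_d.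

Lemma iota_iso k m (x y : Hpow R d (k + m)) : dotv (iotaE k m x) (iotaE k m y) = dotv x y.
Proof.
rewrite /dotv [RHS](reindex (fun p : k.-tuple 'I_d * m.-tuple 'I_d => cat_tuple p.1 p.2)) /=.
  by apply: eq_bigr => p _; rewrite !ffunE.
exact/onW_bij/cat_bij.
Qed.

Lemma iota_equiv k m g (x : Hpow R d (k + m)) :
  iotaE k m (tpow tau g x) = tensop (tpow tau g) (tpow tau g) (iotaE k m x).
Proof.
apply/ffunP => [[t1 t2]]; rewrite /tensop /tid /idt !ffunE sum_cat.
apply: eq_bigr => s1 _; rewrite !ffunE mulr_sumr; apply: eq_bigr => s2 _.
rewrite !ffunE /=; have := @Mt_cat R d tau k m g t1 t2 s1 s2; rewrite /Mt => ->.
by rewrite mulrA.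
Qed.

Lemma iota0m m (x : Hpow R d (0 + m)) t0 (t : m.-tuple 'I_d) : iotaE 0 m x (t0, t) = x t.
Proof. by rewrite ffunE /=; congr (x _); apply: val_inj; rewrite /= (tuple0 t0). Qed.

Lemma iotam0 m (x : Hpow R d (m + 0)) (t : m.-tuple 'I_d) t0 :
  iotaE m 0 x (t, t0) = x (tcast (esym (addn0 m)) t).
Proof. by rewrite ffunE /=; congr (x _); apply: val_inj; rewrite /= val_tcast (tuple0 t0) cats0. Qed.

Lemma iota_assoc k l m (x : Hpow R d (k + (l + m))) (t1 : k.-tuple 'I_d)
  (t2 : l.-tuple 'I_d) (t3 : m.-tuple 'I_d) :
  idt (iotaE l m) (iotaE k (l + m) x) (t1, (t2, t3)) =
  tid (iotaE k l) (iotaE (k + l) m (castA x)) ((t1, t2), t3).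
Proof.
rewrite /idt /tid !ffunE; congr (x _); apply: val_inj.
by rewrite /= val_tcast catA.
Qed.

End Iota.

Lemma take_catT (T : Type) k m (t1 : k.-tuple T) (t2 : m.-tuple T) : take k (cat_tuple t1 t2) = t1.
Proof. by rewrite /= take_size_cat ?size_tuple. Qed.
Lemma drop_catT (T : Type) k m (t1 : k.-tuple T) (t2 : m.-tuple T) : drop k (cat_tuple t1 t2) = t2.
Proof. by rewrite /= drop_size_cat ?size_tuple. Qed.

Section Lift.
Variable R : realType.
Local Notation C := R[i].
Variable d : nat.
Variable tau : 'M[C]_2 -> 'M[C]_d.

Definition lift2 k m (p : Hpow R d k) (e : Hpow R d m) : Hpow R d (k + m) :=
  [ffun t : (k + m).-tuple 'I_d => ext p (take k t) * ext e (drop k t)].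

Lemma iota_lift2 k m (p : Hpow R d k) (e : Hpow R d m) : iotaE k m (lift2 p e) = tens p e.
Proof.
apply/ffunP => [[t1 t2]]; rewrite !ffunE /=.
by rewrite take_size_cat ?size_tuple // drop_size_cat ?size_tuple // !ext_val.
Qed.

Lemma ext_lin n c (p p' : Hpow R d n) s : ext (c *: p + p') s = c * ext p s + ext p' s.
Proof.
rewrite /ext mulr_sumr -big_split; apply: eq_bigr => u _ /=.
by case: ifP; rewrite ?ffunE ?mulr0 ?addr0.
Qed.

Lemma ext0 n s : ext (0 : Hpow R d n) s = 0.
Proof. by rewrite /ext big1 // => u _; case: ifP; rewrite ?ffunE. Qed.

Lemma seq_split3 (s : seq 'I_d) (j : nat) x0 : (j.+2 <= size s)%N ->
  s = take j s ++ nth x0 s j :: nth x0 s j.+1 :: drop j.+2 s.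
Proof.
move=> H; rewrite -{1}(cat_take_drop j s); congr cat.
by rewrite (drop_nth x0) 1?(drop_nth x0) //; lia.
Qed.

Lemma Kslot_liftL k m (j : 'I_k.-1) (e : Hpow R d m) (p : Hpow R d k) :
  Kslot tau j p ->
  exists j' : 'I_(k + m).-1, Kslot tau j' (lift2 p e).
Proof.
move=> Hp.
have Hj' : (j < (k + m).-1)%N by have := ltn_ord j; lia.
exists (Ordinal Hj'); move: Hp.
apply: (span_map (f := fun q => lift2 q e)).
- by apply/ffunP => t; rewrite !ffunE ext0 mul0r.
- by move=> c x y; apply/ffunP => t; rewrite !ffunE !ext_lin mulrDl -mulrA.
move=> z [a [b [xi [Hxi ->]]]]; apply: span_gen.
exists a, (fun s => b (take (k - j.+2) s) * ext e (drop (k - j.+2) s)), xi; split => //.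
apply/ffunP => t; have [t1 [t2 ->]] := cat_onto t.
have Hs : (j.+2 <= size t1)%N by rewrite size_tuple; have := ltn_ord j; lia.
set x0 := tnth t1 (pos1 j).
have Hv1 := seq_split3 x0 Hs.
have Hsz : size (take j t1) = j by rewrite size_takel //; apply: leq_trans Hs; lia.
have Ht : val (cat_tuple t1 t2) = take j t1 ++ nth x0 t1 j :: nth x0 t1 j.+1 :: (drop j.+2 t1 ++ t2).
  by rewrite /= {1}Hv1 -catA.
pose b2 := fun s => b (take (k - j.+2) s) * ext e (drop (k - j.+2) s).
rewrite [RHS](_ : _ = a (take j t1) * xi (nth x0 t1 j, nth x0 t1 j.+1) * b2 (drop j.+2 t1 ++ t2));
  last exact: (@gen_at R d _ (Ordinal Hj') a xi b2 _ _ _ _ _ Ht Hsz).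
rewrite /b2.
rewrite ffunE take_catT drop_catT !ext_val.
have H := gen_at a xi b Hv1 Hsz; rewrite /gen in H; rewrite H.
have Hd : size (drop j.+2 t1) = (k - j.+2)%N by rewrite size_drop size_tuple.
by rewrite mulrA take_size_cat // drop_size_cat // ext_val.
Qed.

Lemma Kslot_liftR k m (j : 'I_m.-1) (f : Hpow R d k) (q : Hpow R d m) :
  Kslot tau j q ->
  exists j' : 'I_(k + m).-1, Kslot tau j' (lift2 f q).
Proof.
move=> Hq.
have Hj' : (k + j < (k + m).-1)%N by have := ltn_ord j; lia.
exists (Ordinal Hj'); move: Hq.
apply: (span_map (f := fun q => lift2 f q)).
- by apply/ffunP => t; rewrite !ffunE ext0 mulr0.
- move=> c x y; apply/ffunP => t; rewrite !ffunE !ext_lin mulrDr.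
  by rewrite mulrCA.
move=> z [a [b [xi [Hxi ->]]]]; apply: span_gen.
exists (fun s => ext f (take k s) * a (drop k s)), b, xi; split => //.
apply/ffunP => t; have [t1 [t2 ->]] := cat_onto t.
have Hs : (j.+2 <= size t2)%N by rewrite size_tuple; have := ltn_ord j; lia.
set x0 := tnth t2 (pos1 j).
have Hv2 := seq_split3 x0 Hs.
have Hsz : size (take j t2) = j by rewrite size_takel //; apply: leq_trans Hs; lia.
have Hsz' : size (t1 ++ take j t2) = (k + j)%N by rewrite size_cat Hsz size_tuple.
have Ht : val (cat_tuple t1 t2) = (t1 ++ take j t2) ++ nth x0 t2 j :: nth x0 t2 j.+1 :: drop j.+2 t2.
  by rewrite /= {1}Hv2 catA.
pose a2 := fun s => ext f (take k s) * a (drop k s).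
rewrite [RHS](_ : _ = a2 (t1 ++ take j t2) * xi (nth x0 t2 j, nth x0 t2 j.+1) * b (drop j.+2 t2));
  last exact: (@gen_at R d _ (Ordinal Hj') a2 xi b _ _ _ _ _ Ht Hsz').
rewrite /a2 ffunE take_catT drop_catT !ext_val.
have H := gen_at a xi b Hv2 Hsz; rewrite /gen in H; rewrite H.
rewrite take_size_cat ?size_tuple // drop_size_cat ?size_tuple // ext_val.
by rewrite !mulrA.
Qed.

End Lift.


Section Main9.
Variable R : realType.
Local Notation C := R[i].
Variable d : nat.
Variable tau : 'M[C]_2 -> 'M[C]_d.

Lemma Ksp_liftL k m (e : Hpow R d m) (p : Hpow R d k) :
  Ksp k tau p -> Ksp (k + m) tau (lift2 p e).
Proof.
apply: (span_map (f := fun q => lift2 q e)).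
- by apply/ffunP => t; rewrite !ffunE ext0 mul0r.
- by move=> c x y; apply/ffunP => t; rewrite !ffunE !ext_lin mulrDl -mulrA.
move=> z [j Hz]; have [j' Hj'] := Kslot_liftL e Hz.
by apply: span_gen; exists j'.
Qed.

Lemma Ksp_liftR k m (f : Hpow R d k) (q : Hpow R d m) :
  Ksp m tau q -> Ksp (k + m) tau (lift2 f q).
Proof.
apply: (span_map (f := fun q => lift2 f q)).
- by apply/ffunP => t; rewrite !ffunE ext0 mulr0.
- by move=> c x y; apply/ffunP => t; rewrite !ffunE !ext_lin mulrDr mulrCA.
move=> z [j Hz]; have [j' Hj'] := Kslot_liftR f Hz.
by apply: span_gen; exists j'.
Qed.

Lemma dotv_tens (X Y : finType) (u p : vec R X) (v e : vec R Y) :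
  dotv (tens u v) (tens p e) = dotv u p * dotv v e.
Proof.
rewrite /dotv mulr_suml; under [RHS]eq_bigr do rewrite mulr_sumr.
rewrite pair_big /=; apply: eq_bigr => [[a b]] _; rewrite !ffunE /= cjM; ring.
Qed.

Definition delta (X : finType) (a : X) : vec R X := [ffun t => (t == a)%:R].

Lemma tens_split (X Y : finType) (u pu qu : vec R X) (v pv qv : vec R Y) :
  u = pu + qu -> v = pv + qv -> tens u v = tens qu qv + (tens pu v + tens qu pv).
Proof. by move=> -> ->; apply/ffunP => t; rewrite !ffunE; ring. Qed.

Lemma vec_expand (X Y : finType) (z : vec R (X * Y)%type) :
  z = \sum_(p : X * Y) z p *: tens (delta p.1) (delta p.2).
Proof.
apply/ffunP => t; rewrite vec_sum (bigD1 t) //= vecZ !ffunE !eqxx mulr1 /= mulr1.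
rewrite big1 ?addr0 // => p Hp; rewrite vecZ !ffunE.
case: (eqVneq t.1 p.1) => [E1|N1]; last by rewrite /= mul0r mulr0.
case: (eqVneq t.2 p.2) => [E2|N2]; last by rewrite /= mulr0 mulr0.
by move: Hp; case: p E1 E2 => [a b] /= <- <-; case: t => ? ?; rewrite eqxx.
Qed.

Lemma iota_tens k m (x : Hpow R d (k + m)) : Esp (k + m) tau x ->
  tensS (Esp k tau) (Esp m tau) (iotaE k m x).
Proof.
move=> Hx.
set TS := tensS (Esp k tau) (Esp m tau).
set Bad := in_span (fun w : vec R (k.-tuple 'I_d * m.-tuple 'I_d)%type =>
  (exists p e, Ksp k tau p /\ w = tens p e) \/ (exists f q, Ksp m tau q /\ w = tens f q)).
have Good : forall z, exists z1 z2, TS z1 /\ Bad z2 /\ z = z1 + z2.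
  move=> z; rewrite [z]vec_expand.
  apply: (span_ind (P := fun w => exists a b, w = tens (delta a) (delta b))
                   (Q := fun z => exists z1 z2, TS z1 /\ Bad z2 /\ z = z1 + z2)).
  - by exists 0, 0; split; [exact: span0 | split; [exact: span0 | rewrite addr0]].
  - move=> c x1 y1 [a1 [a2 [Ha1 [Ha2 ->]]]] [b1 [b2 [Hb1 [Hb2 ->]]]].
    exists (c *: a1 + b1), (c *: a2 + b2); split; first exact: span_lin.
    by split; [exact: span_lin | rewrite scalerDr addrACA].
  - move=> w [a [b ->]].
    have [pa [qa [Hpa [Hqa Ha]]]] := proj_exists (fun y => exists j : 'I_k.-1, Kslot tau j y) (delta a).
    have [pb [qb [Hpb [Hqb Hb]]]] := proj_exists (fun y => exists j : 'I_m.-1, Kslot tau j y) (delta b).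
    exists (tens qa qb), (tens pa (delta b) + tens qa pb); split.
      by apply: span_gen; exists qa, qb.
    split; last exact: tens_split.
    rewrite -[tens pa _]scale1r; apply: span_lin; apply: span_gen.
      by left; exists pa, (delta b).
    by right; exists qa, pb.
  - by apply: span_sum => p; apply: span_scale; apply: span_gen; exists p.1, p.2.
have [z1 [z2 [H1 [H2 Hz]]]] := Good (iotaE k m x).
have orth_z : forall w, Bad w -> dotv w (iotaE k m x) = 0.
  apply: span_orth => w [[p [e [Hp ->]]]|[f [q [Hq ->]]]].
    by rewrite -iota_lift2 iota_iso; apply: Hx; apply: Ksp_liftL.
  by rewrite -iota_lift2 iota_iso; apply: Hx; apply: Ksp_liftR.
have orth_z1 : forall w, Bad w -> dotv w z1 = 0.
  apply: span_orth => w Hw; rewrite dotvC.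
  suff -> : dotv z1 w = 0 by rewrite cj0.
  move: H1; apply: (span_ind (Q := fun z => dotv z w = 0)).
  - exact: dotv0l.
  - by move=> c u v Hu Hv; rewrite dotvDl dotvZl Hu Hv mulr0 addr0.
  move=> y [u [v [Hu Hv ->]]].
  case: Hw => [[p [e [Hp ->]]]|[f [q [Hq ->]]]]; rewrite dotv_tens.
    by rewrite dotvC Hu // cj0 mul0r.
  by rewrite [dotv v q]dotvC Hv // cj0 mulr0.
have E2 : z2 = iotaE k m x - z1 by rewrite Hz addrC addKr.
have : dotv z2 z2 = 0 by rewrite {2}E2 dotvBr orth_z // orth_z1 // subrr.
by move=> /dotvv_eq0 Z2; rewrite Hz Z2 addr0.
Qed.

End Main9.


Section Cont.
Variable R : realType.
Local Notation C := R[i].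
Variable g : 'M[C]_2.

Definition mn (a b : C) := if a <= b then a else b.
Lemma mn_gt0 a b : 0 < a -> 0 < b -> 0 < mn a b.
Proof. by rewrite /mn; case: ifP. Qed.
Lemma mn_lel a b : 0 < a -> 0 < b -> mn a b <= a.
Proof.
move=> Ha Hb; rewrite /mn; case: ifP => [_|/negbT H]; first exact: lexx.
by have := real_leVge (gtr0_real Ha) (gtr0_real Hb); rewrite (negbTE H).
Qed.
Lemma mn_ler a b : 0 < a -> 0 < b -> mn a b <= b.
Proof. by move=> Ha Hb; rewrite /mn; case: ifP => // _; exact: lexx. Qed.

Lemma close_mono (h : 'M[C]_2) a b : a <= b -> mx_close h g a -> mx_close h g b.
Proof. by move=> Hab H i j; apply: lt_le_trans (H i j) Hab. Qed.

Definition cont (f : 'M[C]_2 -> C) := forall e : C, 0 < e -> exists2 delta : C, 0 < delta &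
  forall h, SU2 h -> mx_close h g delta -> `|f h - f g| < e.

Lemma cont_ext f f' : cont f -> (forall h, f h = f' h) -> cont f'.
Proof.
move=> Hf E e He; have [dl Hdl H] := Hf e He; exists dl => // h Hh Hc.
by rewrite -!E; apply: H.
Qed.

Lemma cont_const c : cont (fun _ => c).
Proof. by move=> e He; exists 1 => // h _ _; rewrite subrr normr0. Qed.

Lemma cont_add f1 f2 : cont f1 -> cont f2 -> cont (fun h => f1 h + f2 h).
Proof.
move=> H1 H2 e He.
have He2 : 0 < e / 2 by apply: divr_gt0 => //; rewrite ltr0n.
have [d1 Hd1 K1] := H1 _ He2; have [d2 Hd2 K2] := H2 _ He2.
exists (mn d1 d2); first exact: mn_gt0.
move=> h Hh Hc; rewrite (splitr e).
have -> : f1 h + f2 h - (f1 g + f2 g) = (f1 h - f1 g) + (f2 h - f2 g) by ring.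
apply: le_lt_trans (ler_normD _ _) _; apply: ltrD.
  by apply: K1 => //; apply: close_mono Hc; apply: mn_lel.
by apply: K2 => //; apply: close_mono Hc; apply: mn_ler.
Qed.

Lemma cont_mul f1 f2 : cont f1 -> cont f2 -> cont (fun h => f1 h * f2 h).
Proof.
move=> H1 H2 e He.
set a := f1 g; set b := f2 g.
set K := 1 + `|a| + `|b|.
have HK : 0 < K by rewrite /K -addrA ltr_pwDl // addr_ge0.
set eps := mn 1 (e / K).
have Heps : 0 < eps by apply: mn_gt0 => //; apply: divr_gt0.
have Heps1 : eps <= 1 by apply: mn_lel => //; apply: divr_gt0.
have Heps2 : eps <= e / K by apply: mn_ler => //; apply: divr_gt0.
have [d1 Hd1 K1] := H1 _ Heps; have [d2 Hd2 K2] := H2 _ Heps.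
exists (mn d1 d2); first exact: mn_gt0.
move=> h Hh Hc.
have HA : `|f1 h - a| < eps by apply: K1 => //; apply: close_mono Hc; apply: mn_lel.
have HB : `|f2 h - b| < eps by apply: K2 => //; apply: close_mono Hc; apply: mn_ler.
set A := f1 h - a in HA *; set B := f2 h - b in HB *.
have -> : f1 h * f2 h - a * b = B * A + (a * B + A * b) by rewrite /A /B; ring.
apply: le_lt_trans (ler_normD _ _) _; rewrite !normrM.
apply: (@lt_le_trans _ _ (eps * K)); last first.
  by rewrite -(divfK (lt0r_neq0 HK) e); apply: ler_wpM2r => //; apply: ltW.
have -> : eps * K = eps + (`|a| * eps + eps * `|b|) by rewrite /K; ring.
apply: ltr_leD.
  by apply: le_lt_trans HA; apply: ler_piMl => //; apply: ltW; apply: lt_le_trans HB Heps1.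
apply: le_trans (ler_normD _ _) _; rewrite !normrM; apply: lerD.
  by apply: ler_wpM2l => //; apply: ltW.
by apply: ler_wpM2r => //; apply: ltW.
Qed.

Lemma cont_sum (I : Type) (r : seq I) (F : I -> 'M[C]_2 -> C) :
  (forall i, cont (F i)) -> cont (fun h => \sum_(i <- r) F i h).
Proof.
move=> HF; elim: r => [|x r IH].
  by apply: cont_ext (cont_const 0) _ => h; rewrite big_nil.
by apply: cont_ext (cont_add (HF x) IH) _ => h; rewrite big_cons.
Qed.

Lemma cont_prod (I : Type) (r : seq I) (F : I -> 'M[C]_2 -> C) :
  (forall i, cont (F i)) -> cont (fun h => \prod_(i <- r) F i h).
Proof.
move=> HF; elim: r => [|x r IH].
  by apply: cont_ext (cont_const 1) _ => h; rewrite big_nil.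
by apply: cont_ext (cont_mul (HF x) IH) _ => h; rewrite big_cons.
Qed.

Lemma cont_family (I : finType) (F : I -> 'M[C]_2 -> C) :
  (forall i, cont (F i)) -> forall e : C, 0 < e -> exists2 delta : C, 0 < delta &
  forall h, SU2 h -> mx_close h g delta -> forall i, `|F i h - F i g| < e.
Proof.
move=> HF e He.
suff : forall r : seq I, exists2 delta : C, 0 < delta &
  forall h, SU2 h -> mx_close h g delta -> forall i, i \in r -> `|F i h - F i g| < e.
  by case/(_ (enum I)) => dl Hdl H; exists dl => // h Hh Hc i; apply: H => //; rewrite mem_enum.
elim=> [|x r [dl Hdl IH]]; first by exists 1.
have [d1 Hd1 K1] := HF x e He.
exists (mn d1 dl); first exact: mn_gt0.
move=> h Hh Hc i; rewrite inE => /orP [/eqP ->|Hi].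
  by apply: K1 => //; apply: close_mono Hc; apply: mn_lel.
by apply: IH => //; apply: close_mono Hc; apply: mn_ler.
Qed.

End Cont.

Section Cont2.
Variable R : realType.
Local Notation C := R[i].
Variable d : nat.
Variable tau : 'M[C]_2 -> 'M[C]_d.
Hypothesis Hcont : strongly_continuous tau.


Lemma mulcol (M : 'M[C]_d) a b : (M *m \col_i (i == b)%:R) a 0 = M a b.
Proof.
rewrite mxE (bigD1 b) //= mxE eqxx mulr1 big1 ?addr0 // => k /negbTE Hk.
by rewrite mxE Hk mulr0.
Qed.

Lemma cont_entry g a b : SU2 g -> cont g (fun h => tau h a b).
Proof.
move=> Hg e He; have [dl Hdl H] := Hcont (\col_i (i == b)%:R) Hg He.
by exists dl => // h Hh Hc; have := H h Hh Hc a 0; rewrite !mulcol.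
Qed.

Lemma tpow_cont m (x : Hpow R d m) g : SU2 g ->
  forall e : C, 0 < e -> exists2 delta : C, 0 < delta &
    forall h, SU2 h -> mx_close h g delta ->
      forall t, `|tpow tau h x t - tpow tau g x t| < e.
Proof.
move=> Hg; apply: (cont_family (F := fun t h => tpow tau h x t)) => t.
apply: cont_ext (@cont_sum R g _ (index_enum _) (fun s h => Mt tau h t s * x s) _) _; last first.
  by move=> h; rewrite tpowE.
move=> s; apply: cont_mul; last exact: cont_const.
apply: cont_ext (@cont_prod R g _ (index_enum _) (fun i h => tau h (tnth t i) (tnth s i)) _) _ => //.
by move=> i; apply: cont_entry.
Qed.

End Cont2.


Unset Implicit Arguments. Set Strict Implicit.

Theorem proposition2p3 (R : realType) (d : nat)
    (tau : 'M[R[i]]_2 -> 'M[R[i]]_d)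
    (Hrep : unitary_rep tau) (Hcont : strongly_continuous tau) :
  (forall x : Hpow R d 0, Esp 0 tau x) /\
  (forall m g (x : Hpow R d m), SU2 g -> Esp m tau x -> Esp m tau (tpow tau g x)) /\
  (forall m g (x y : Hpow R d m), SU2 g -> Esp m tau x -> Esp m tau y ->
     dotv (tpow tau g x) (tpow tau g y) = dotv x y) /\
  (forall m g (y : Hpow R d m), SU2 g -> Esp m tau y ->
     exists2 x, Esp m tau x & tpow tau g x = y) /\
  (forall m g h (x : Hpow R d m), SU2 g -> SU2 h -> Esp m tau x ->
     tpow tau (g *m h) x = tpow tau g (tpow tau h x)) /\
  (forall m (x : Hpow R d m), Esp m tau x -> tpow tau 1%:M x = x) /\
  (forall g (x : Hpow R d 0), SU2 g -> Esp 0 tau x -> tpow tau g x = x) /\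
  (forall m (x : Hpow R d m), Esp m tau x -> forall g, SU2 g ->
     forall e : R[i], 0 < e -> exists2 delta : R[i], 0 < delta &
       forall h, SU2 h -> mx_close h g delta ->
         forall t, `|tpow tau h x t - tpow tau g x t| < e) /\
  (forall k m (x : Hpow R d (k + m)), Esp (k + m) tau x ->
     tensS (Esp k tau) (Esp m tau) (iotaE k m x)) /\
  (forall k m (x y : Hpow R d (k + m)), Esp (k + m) tau x -> Esp (k + m) tau y ->
     dotv (iotaE k m x) (iotaE k m y) = dotv x y) /\
  (forall k m g (x : Hpow R d (k + m)), SU2 g -> Esp (k + m) tau x ->
     iotaE k m (tpow tau g x) = tensop (tpow tau g) (tpow tau g) (iotaE k m x)) /\
  (forall m (x : Hpow R d (0 + m)), Esp (0 + m) tau x ->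
     forall t0 (t : m.-tuple 'I_d), iotaE 0 m x (t0, t) = x t) /\
  (forall m (x : Hpow R d (m + 0)), Esp (m + 0) tau x ->
     forall (t : m.-tuple 'I_d) t0,
       iotaE m 0 x (t, t0) = x (tcast (esym (addn0 m)) t)) /\
  (forall k l m (x : Hpow R d (k + (l + m))), Esp (k + (l + m)) tau x ->
     forall (t1 : k.-tuple 'I_d) (t2 : l.-tuple 'I_d) (t3 : m.-tuple 'I_d),
       idt (iotaE l m) (iotaE k (l + m) x) (t1, (t2, t3)) =
       tid (iotaE k l) (iotaE (k + l) m (castA x)) ((t1, t2), t3)).
Proof.
split.
  by move=> x; apply: span_orth => y [[j Hj]].
split; first by move=> m g x Hg Hx; apply: Esp_inv.
split; first by move=> m g x y Hg _ _; apply: tpow_iso.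
split.
  move=> m g y Hg Hy; have [Ha _] := SU2_adj Hg.
  exists (tpow tau (adjmx g) y); first exact: Esp_inv.
  by rewrite -(tpow_mul Hrep) // (proj1 Hg) (tpow_one Hrep).
split; first by move=> m g h x Hg Hh _; apply: tpow_mul.
split; first by move=> m x _; apply: tpow_one.
split; first by move=> g x _ _; apply: tpow0.
split; first by move=> m x _ g Hg; apply: tpow_cont.
split; first by move=> k m x Hx; apply: iota_tens.
split; first by move=> k m x y _ _; apply: iota_iso.
split; first by move=> k m g x _ _; apply: iota_equiv.
split; first by move=> m x _ t0 t; apply: iota0m.
split; first by move=> m x _ t t0; apply: iotam0.
by move=> k l m x _ t1 t2 t3; apply: iota_assoc.
Qed.
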